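(* For every tree $T\subseteq\mathbb{N}^{<\mathbb{N}}$, the set $\mathcal{JT}(T)=\{J(\sigma):\sigma\in T\}$ is a tree and is computable in $T$.
   Context: A tree is a subset of $\mathbb{N}^{<\mathbb{N}}$ closed under initial segments. Finite strings of natural numbers are coded by natural numbers via a fixed computable coding in which $\sigma\subsetneq\tau$ implies code$(\sigma)<$ code$(\tau)$. For a finite string $\sigma$ and $\tau$, $\{n\}^{\tau}(n)\downarrow$ means the $n$-th Turing machine on input $n$ with oracle $\tau$ halts in fewer than $|\tau|$ steps. Set $t_{-1}=1$ and $t_n=\max\{t_{n-1}+1,\ \mu t(\{n\}^{\sigma\restriction t}(n)\downarrow)\}$ (with $t_n=t_{n-1}+1$ if no such $t$), where $\sigma\restriction t$ is the initial segment of length $\min(t,|\sigma|)$; the Jump function is $J(\sigma)=\langle\sigma\restriction t_0,\dots,\sigma\restriction t_{k-1}\rangle$, where $k$ is least with $t_k>|\sigma|$. *)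

(* Defs.v *)
From mathcomp Require Import all_boot.
Set Implicit Arguments. Unset Strict Implicit. Unset Printing Implicit Defensive.

(* Coding of finite strings of naturals: MathComp's Goedel coding      *)
(* CodeSeq.code : seq nat -> nat (a bijection with inverse             *)
(* CodeSeq.decode).  It satisfies: s strict prefix of t ->             *)
(* code s < code t, as required by the paper.                          *)
Definition scode : seq nat -> nat := CodeSeq.code.
Definition sdecode : nat -> seq nat := CodeSeq.decode.

Definition is_tree (A : seq nat -> Prop) : Prop :=
  forall s t : seq nat, prefix s t -> A t -> A s.

(* Model of computation: oracle register machines (Cutland's URM with  *)
(* an oracle instruction).  Registers R_0, R_1, ... hold naturals.     *)
Inductive instr :=
| IZ of nat                 (* R_a := 0 *)
| IS of nat                 (* R_a := R_a + 1 *)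
| IT of nat & nat           (* R_b := R_a *)
| IJ of nat & nat & nat     (* if R_a = R_b then goto q else next *)
| IO of nat.                (* R_a := oracle(R_a) *)

Definition program := seq instr.

Definition instr_of_nat (m : nat) : instr :=
  match sdecode m with
  | [:: 0; a] => IZ a
  | [:: 1; a] => IS a
  | [:: 2; a; b] => IT a b
  | [:: 3; a; b; q] => IJ a b q
  | [:: 4; a] => IO a
  | _ => IZ 0
  end.

Definition machine (e : nat) : program := map instr_of_nat (sdecode e).

(* An oracle is a partial function nat -> nat; a query outside its
   domain makes the computation get stuck (it never halts). *)
Definition oracle := nat -> option nat.

Definition str_oracle (tau : seq nat) : oracle :=
  fun i => if i < size tau then Some (nth 0 tau i) else None.

Definition set_oracle (T : pred (seq nat)) : oracle :=
  fun x => Some (nat_of_bool (T (sdecode x))).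

(* machine state: program counter and registers *)
Definition state := (nat * (nat -> nat))%type.

Definition init (x : nat) : state := (0, fun i => if i == 0 then x else 0).

Definition upd (r : nat -> nat) (a v : nat) : nat -> nat :=
  fun i => if i == a then v else r i.

Definition halted (p : program) (st : state) : bool := size p <= st.1.

Definition step (p : program) (o : oracle) (st : state) : option state :=
  let: (pc, r) := st in
  match nth (IZ 0) p pc with
  | IZ a => Some (pc.+1, upd r a 0)
  | IS a => Some (pc.+1, upd r a (r a).+1)
  | IT a b => Some (pc.+1, upd r b (r a))
  | IJ a b q => Some (if r a == r b then q else pc.+1, r)
  | IO a => match o (r a) with
            | Some v => Some (pc.+1, upd r a v)
            | None => None
            end
  end.

(* run p o s st = Some st' iff the computation from st halts in fewer
   than s steps, st' being the halting state. *)
Fixpoint run (p : program) (o : oracle) (s : nat) (st : state)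
  : option state :=
  match s with
  | 0 => None
  | s'.+1 =>
      if halted p st then Some st
      else match step p o st with
           | Some st' => run p o s' st'
           | None => None
           end
  end.

(* {n}^tau(n) converges: the n-th machine on input n with oracle tau
   halts in fewer than |tau| steps. *)
Definition conv (n : nat) (tau : seq nat) : bool :=
  isSome (run (machine n) (str_oracle tau) (size tau) (init n)).

(* sigma|t = take t sigma  (length min(t, |sigma|)).                   *)

(* mu t ({n}^{sigma|t}(n) converges); it suffices to search t <= |sigma|
   since sigma|t = sigma for t >= |sigma|. *)
Definition mu_t (n : nat) (sigma : seq nat) : option nat :=
  let i := find (fun t => conv n (take t sigma)) (iota 0 (size sigma).+1) in
  if i <= size sigma then Some i else None.

Definition t_step (sigma : seq nat) (prev n : nat) : nat :=
  match mu_t n sigma with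
  | Some t => maxn prev.+1 t
  | None => prev.+1
  end.

(* tseq sigma n = t_n, with t_{-1} = 1 *)
Fixpoint tseq (sigma : seq nat) (n : nat) : nat :=
  match n with
  | 0 => t_step sigma 1 0
  | n'.+1 => t_step sigma (tseq sigma n') n
  end.

(* k = least k with t_k > |sigma| (t_k >= k+2, so k <= |sigma|) *)
Definition jk (sigma : seq nat) : nat :=
  find (fun k => size sigma < tseq sigma k) (iota 0 (size sigma).+1).

(* J(sigma) = < sigma|t_0, ..., sigma|t_{k-1} > (entries are codes) *)
Definition J (sigma : seq nat) : seq nat :=
  [seq scode (take (tseq sigma i) sigma) | i <- iota 0 (jk sigma)].

Definition JT (T : pred (seq nat)) (s : seq nat) : Prop :=
  exists2 sigma, T sigma & J sigma = s.

Definition computable_in (T : pred (seq nat)) (A : seq nat -> Prop) : Prop :=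
  exists e : nat, forall x : nat, exists s st,
    run (machine e) (set_oracle T) s (init x) = Some st /\
    ((st.2 0 = 1 /\ A (sdecode x)) \/ (st.2 0 = 0 /\ ~ A (sdecode x))).

(* Main.v *)
Require Import Defs.
From mathcomp Require Import all_boot.
From Stdlib Require Import Lia.
From mathcomp Require Import zify.
Set Implicit Arguments. Unset Strict Implicit. Unset Printing Implicit Defensive.

Inductive expr :=
| EVar of nat
| EZero
| ESucc of expr
| EOr of expr
| ELet of expr & expr
| EIf of expr & expr & expr & expr
| EIter of expr & expr & expr
| ECall of expr & expr & expr & expr & expr.

Fixpoint iterk (k : nat) (f : nat -> nat -> nat) (a : nat) : nat :=
  match k with 0 => a | k'.+1 => f k' (iterk k' f a) end.

Fixpoint eval (g : nat -> nat) (env : seq nat) (e : expr) : nat :=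
  match e with
  | EVar k => nth 0 env k
  | EZero => 0
  | ESucc e => (eval g env e).+1
  | EOr e => g (eval g env e)
  | ELet e1 e2 => eval g (eval g env e1 :: env) e2
  | EIf e1 e2 e3 e4 => if eval g env e1 == eval g env e2 then eval g env e3 else eval g env e4
  | EIter n a b => iterk (eval g env n) (fun i acc => eval g [:: acc, i & env] b) (eval g env a)
  | ECall m a1 a2 a3 a4 => eval g [:: eval g env a1; eval g env a2; eval g env a3; eval g env a4] m
  end.

Fixpoint csize e := match e with
| EVar _ => 1 | EZero => 1 | ESucc e => csize e + 1 | EOr e => csize e + 1
| ELet e1 e2 => csize e1 + csize e2 + 1
| EIf e1 e2 e3 e4 => csize e1 + csize e2 + 1 + csize e4 + 1 + csize e3
| EIter n a body => csize n + csize a + 1 + 1 + 1 + csize body + 1 + 1 + 1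
| ECall m a1 a2 a3 a4 => csize a1 + csize a2 + csize a3 + csize a4 + csize m + 1
end.

Fixpoint comp (e : expr) (rs : seq nat) (f b : nat) : program :=
  match e with
  | EVar k => [:: if k < size rs then IT (nth 0 rs k) f else IZ f]
  | EZero => [:: IZ f]
  | ESucc e => comp e rs f b ++ [:: IS f]
  | EOr e => comp e rs f b ++ [:: IO f]
  | ELet e1 e2 => comp e1 rs f b ++ comp e2 (f :: rs) f.+1 (b + csize e1) ++ [:: IT f.+1 f]
  | EIf e1 e2 e3 e4 =>
     let b2 := b + csize e1 in let bj := b2 + csize e2 in let b4 := bj + 1 in
     let bj2 := b4 + csize e4 in let b3 := bj2 + 1 in let bend := b3 + csize e3 in
     comp e1 rs f b ++ comp e2 rs f.+1 b2 ++ [:: IJ f f.+1 b3] ++ comp e4 rs f b4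
       ++ [:: IJ 0 0 bend] ++ comp e3 rs f b3
  | EIter n a body =>
     let ba := b + csize n in let bc := ba + csize a in let bl := bc + 2 in
     let bb := bl + 1 in let bend := bb + csize body + 3 in
     comp n rs f.+1 b ++ comp a rs f.+2 ba ++ [:: IT f.+2 f; IZ f.+2; IJ f.+2 f.+1 bend]
       ++ comp body [:: f, f.+2 & rs] f.+3 bb ++ [:: IT f.+3 f; IS f.+2; IJ 0 0 bl]
  | ECall m a1 a2 a3 a4 =>
     let b2 := b + csize a1 in let b3 := b2 + csize a2 in let b4 := b3 + csize a3 in
     let bm := b4 + csize a4 in
     comp a1 rs f b ++ comp a2 rs f.+1 b2 ++ comp a3 rs f.+2 b3 ++ comp a4 rs f.+3 b4
       ++ comp m [:: f; f.+1; f.+2; f.+3] f.+4 bm ++ [:: IT f.+4 f]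
  end.

Lemma size_comp e rs f b : size (comp e rs f b) = csize e.
Proof.
elim: e rs f b => //= *;
repeat (rewrite size_cat /= || match goal with H : forall _ _ _, size (comp _ _ _ _) = _ |- _ => rewrite !H; clear H end); lia.
Qed.

Inductive exec (p : program) (o : oracle) : state -> state -> Prop :=
| ex_refl st : exec p o st st
| ex_step st st' st'' : ~~ halted p st -> step p o st = Some st' -> exec p o st' st'' -> exec p o st st''.

Lemma exec_trans p o s1 s2 s3 : exec p o s1 s2 -> exec p o s2 s3 -> exec p o s1 s3.
Proof. elim=> // st st' st'' H1 H2 _ IH H3; apply: ex_step H1 H2 (IH H3). Qed.

Lemma exec_run p o st st' : exec p o st st' -> halted p st' -> exists s, run p o s st = Some st'.
Proof.
elim=> [st0 H|st0 st1 st2 Hh Hs _ IH H]; first by exists 1; rewrite /= H.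
have [s Hr] := IH H; exists s.+1; by rewrite /= (negbTE Hh) Hs.
Qed.

Definition at_ (p : program) b (c : program) := exists pre post, p = pre ++ c ++ post /\ size pre = b.

Lemma at_catl p b c1 c2 : at_ p b (c1 ++ c2) -> at_ p b c1.
Proof. case=> pre [post [-> Hs]]. exists pre. exists (c2 ++ post). by rewrite -catA. Qed.
Lemma at_catr p b c1 c2 : at_ p b (c1 ++ c2) -> at_ p (b + size c1) c2.
Proof. case=> pre [post [-> Hs]]. exists (pre ++ c1). exists post. by rewrite -!catA size_cat Hs. Qed.

Lemma at_ins p b i : at_ p b [:: i] -> nth (IZ 0) p b = i /\ b < size p.
Proof.
case=> pre [post [-> <-]]; rewrite nth_cat ltnn subnn /= size_cat /=; split=> //; rewrite addnS; exact: leq_addr.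
Qed.

Lemma exec1 p o b r i st' : at_ p b [:: i] -> step p o (b, r) = Some st' -> exec p o (b, r) st'.
Proof.
move=> /at_ins [_ Hb] Hs; apply: ex_step Hs (ex_refl _ _ _); by rewrite /halted /= -ltnNge.
Qed.

Definition stepi (o : oracle) (i : instr) (st : state) : option state :=
  let: (pc, r) := st in
  match i with
  | IZ a => Some (pc.+1, upd r a 0)
  | IS a => Some (pc.+1, upd r a (r a).+1)
  | IT a b => Some (pc.+1, upd r b (r a))
  | IJ a b q => Some (if r a == r b then q else pc.+1, r)
  | IO a => match o (r a) with
            | Some v => Some (pc.+1, upd r a v)
            | None => None
            end
  end.

Lemma exec_ins p o st b r i st' : exec p o st (b, r) -> at_ p b [:: i] ->
  stepi o i (b, r) = Some st' -> exec p o st st'.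
Proof.
move=> He Ha Hs; apply: (exec_trans He); apply: (exec1 Ha).
by move: (at_ins Ha) => [Hn _]; rewrite /step Hn.
Qed.

Lemma map_frame (r r' : nat -> nat) rs f : all (fun x => x < f) rs ->
  (forall j, j < f -> r' j = r j) -> map r' rs = map r rs.
Proof. move=> /allP Ha Hf; apply/eq_in_map => x /Ha; exact: Hf. Qed.

Section Comp.
Variable g : nat -> nat.
Let og : oracle := fun x => Some (g x).

Definition Ok e := forall rs f b r p, all (fun x => x < f) rs -> at_ p b (comp e rs f b) ->
  exists r', exec p og (b, r) (b + csize e, r') /\ r' f = eval g (map r rs) e /\
    (forall j, j < f -> r' j = r j).

Lemma updE (r : nat -> nat) a v j : upd r a v j = if j == a then v else r j.
Proof. by []. Qed.

Lemma allS (rs : seq nat) f : all (fun x => x < f) rs -> all (fun x => x < f.+1) rs.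
Proof. move=> /allP H; apply/allP => x /H; lia. Qed.
Lemma allSn (rs : seq nat) f n : all (fun x => x < f) rs -> all (fun x => x < f + n) rs.
Proof. move=> /allP H; apply/allP => x /H; lia. Qed.

Lemma ok_var k : Ok (EVar k).
Proof.
move=> rs f b r p Hrs Ha; rewrite /= in Ha *; rewrite addn1.
case Hk: (k < size rs) in Ha *.
- eexists; split; first by apply: (exec_ins (ex_refl _ _ _) Ha).
  split; first by rewrite updE eqxx (nth_map 0).
  move=> j Hj; rewrite updE; case: eqP => //; lia.
- eexists; split; first by apply: (exec_ins (ex_refl _ _ _) Ha).
  split; first by rewrite updE eqxx nth_default // size_map leqNgt Hk.
  move=> j Hj; rewrite updE; case: eqP => //; lia.
Qed.
Ltac fr := move=> j Hj; rewrite ?updE; repeat (case: eqP => [?|?]); try lia.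

Lemma ok_zero : Ok EZero.
Proof.
move=> rs f b r p Hrs Ha; rewrite /= in Ha *; rewrite addn1.
eexists; split; first by apply: (exec_ins (ex_refl _ _ _) Ha).
split; first by rewrite updE eqxx.
fr; auto.
Qed.

Lemma ok_succ e : Ok e -> Ok (ESucc e).
Proof.
move=> IH rs f b r p Hrs Ha; rewrite /= in Ha *.
have [r1 [E1 [V1 F1]]] := IH rs f b r p Hrs (at_catl Ha).
have Ha2 := at_catr Ha; rewrite size_comp in Ha2.
rewrite addnA addn1.
eexists; split; first by apply: (exec_ins E1 Ha2).
split; first by rewrite updE eqxx V1.
fr; auto.
Qed.

Lemma ok_or e : Ok e -> Ok (EOr e).
Proof.
move=> IH rs f b r p Hrs Ha; rewrite /= in Ha *.
have [r1 [E1 [V1 F1]]] := IH rs f b r p Hrs (at_catl Ha).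
have Ha2 := at_catr Ha; rewrite size_comp in Ha2.
rewrite addnA addn1.
eexists; split; first by apply: (exec_ins E1 Ha2).
split; first by rewrite updE eqxx V1.
fr; auto.
Qed.

Lemma ok_let e1 e2 : Ok e1 -> Ok e2 -> Ok (ELet e1 e2).
Proof.
move=> IH1 IH2 rs f b r p Hrs Ha; rewrite /= in Ha *.
have [r1 [E1 [V1 F1]]] := IH1 rs f b r p Hrs (at_catl Ha).
have Ha2 := at_catr Ha; rewrite size_comp in Ha2.
have Hrs2 : all (fun x => x < f.+1) (f :: rs) by rewrite /= ltnSn allS.
have [r2 [E2 [V2 F2]]] := IH2 (f :: rs) f.+1 (b + csize e1) r1 p Hrs2 (at_catl Ha2).
have Ha3 := at_catr Ha2; rewrite size_comp in Ha3.
rewrite !addnA addn1.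
eexists; split; first by apply: (exec_ins (exec_trans E1 E2) Ha3).
split; first by rewrite updE eqxx V2 /= V1 (map_frame Hrs F1).
fr; rewrite F2 ?F1 //; lia.
Qed.
Lemma at_cons p b i c : at_ p b (i :: c) -> at_ p b [:: i].
Proof. by move=> H; apply: (@at_catl _ _ _ c). Qed.
Lemma at_consr p b i c : at_ p b (i :: c) -> at_ p (b + 1) c.
Proof. by move=> H; apply: (@at_catr _ _ [:: i] c). Qed.

Lemma at_eq p b b' c : at_ p b c -> b = b' -> at_ p b' c.
Proof. by move=> H <-. Qed.

Lemma ok_if e1 e2 e3 e4 : Ok e1 -> Ok e2 -> Ok e3 -> Ok e4 -> Ok (EIf e1 e2 e3 e4).
Proof.
move=> IH1 IH2 IH3 IH4 rs f b r p Hrs Ha; rewrite /= in Ha *.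
set b3 := b + csize e1 + csize e2 + 1 + csize e4 + 1 in Ha *.
have [r1 [E1 [V1 F1]]] := IH1 rs f b r p Hrs (at_catl Ha).
have Ha2 := at_catr Ha; rewrite size_comp in Ha2.
have [r2 [E2 [V2 F2]]] := IH2 rs f.+1 (b + csize e1) r1 p (allS Hrs) (at_catl Ha2).
have Ha3 := at_catr Ha2; rewrite size_comp in Ha3.
have Hj := at_cons Ha3.
have Ha4 := at_consr Ha3.
have [r4 [E4 [V4 F4]]] := IH4 rs f (b + csize e1 + csize e2 + 1) r2 p Hrs (at_catl Ha4).
have Ha5 := at_catr Ha4; rewrite size_comp in Ha5.
have Hj2 := at_cons Ha5.
have Ha6 := at_consr Ha5.
have [r3 [E3 [V3 F3]]] := IH3 rs f b3 r2 p Hrs Ha6.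
have M2 : map r2 rs = map r rs.
  by rewrite (map_frame (allS Hrs) F2) (map_frame Hrs F1).
have R2f : r2 f = r1 f by rewrite F2.
case Eq: (eval g [seq r i | i <- rs] e1 == eval g [seq r i | i <- rs] e2).
- have -> : b + (csize e1 + csize e2 + 1 + csize e4 + 1 + csize e3) = b3 + csize e3 by rewrite /b3; lia.
  exists r3; split.
    apply: (exec_trans _ E3); apply: (exec_ins (exec_trans E1 E2) Hj).
    by rewrite /= R2f V1 V2 (map_frame Hrs F1) Eq.
  split; first by rewrite V3 M2.
  move=> j Hj'; rewrite F3 // F2 ?F1 //; lia.
- have E' : exec p og (b, r) (b + csize e1 + csize e2 + 1, r2).
    apply: (exec_ins (exec_trans E1 E2) Hj).
    by rewrite /= R2f V1 V2 (map_frame Hrs F1) Eq addn1.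
  exists r4; split.
    apply: (exec_ins (exec_trans E' E4) Hj2).
    rewrite /= eqxx /b3; congr (Some (_, _)); lia.
  split; first by rewrite V4 M2.
  move=> j Hj'; rewrite F4 // F2 ?F1 //; lia.
Qed.
Lemma ok_iter en ea eb : Ok en -> Ok ea -> Ok eb -> Ok (EIter en ea eb).
Proof.
move=> IHn IHa IHb rs f b r p Hrs Ha; rewrite /= in Ha *.
set bl := b + csize en + csize ea + 2 in Ha *.
set bend := bl + 1 + csize eb + 3 in Ha *.
have [r1 [E1 [V1 F1]]] := IHn rs f.+1 b r p (allS Hrs) (at_catl Ha).
have Ha2 := at_catr Ha; rewrite size_comp in Ha2.
have [r2 [E2 [V2 F2]]] := IHa rs f.+2 (b + csize en) r1 p (allS (allS Hrs)) (at_catl Ha2).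
have Ha3 := at_catr Ha2; rewrite size_comp in Ha3.
have Hi1 := at_cons Ha3. have Ha4 := at_consr Ha3.
have Hi2 := at_cons Ha4. have Ha5 := at_consr Ha4.
have Hi3 := at_cons Ha5. have Ha6 := at_consr Ha5.
have {}Hi3 : at_ p bl [:: IJ f.+2 f.+1 bend] by apply: (at_eq Hi3); rewrite /bl; lia.
have {}Ha6 : at_ p (bl + 1) (comp eb [:: f, f.+2 & rs] f.+3 (bl + 1) ++ [:: IT f.+3 f; IS f.+2; IJ 0 0 bl]).
  by apply: (at_eq Ha6); rewrite /bl; lia.
have Hb := at_catl Ha6.
have Ha7 := at_catr Ha6; rewrite size_comp in Ha7.
have Hj1 := at_cons Ha7. have Ha8 := at_consr Ha7.
have Hj2 := at_cons Ha8. have Ha9 := at_consr Ha8.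
have Hj3 := at_cons Ha9.
have {}Hj2 : at_ p (bl + 1 + csize eb).+1 [:: IS f.+2] by apply: (at_eq Hj2); lia.
have {}Hj3 : at_ p (bl + 1 + csize eb).+2 [:: IJ 0 0 bl] by apply: (at_eq Hj3); lia.
set N := eval g [seq r i | i <- rs] en.
set A := eval g [seq r i | i <- rs] ea.
set F := fun i acc => eval g [:: acc, i & [seq r i | i <- rs]] eb.
have Hrsb : all (fun x => x < f.+3) [:: f, f.+2 & rs] by rewrite /= (allS (allS (allS Hrs))) andbT; apply/andP; split; lia.
have Loop : forall m k rk, k + m = N -> rk f.+2 = k -> rk f.+1 = N -> rk f = iterk k F A ->
    (forall j, j < f -> rk j = r j) -> exists r', exec p og (bl, rk) (bend, r') /\ r' f = iterk N F A /\ (forall j, j < f -> r' j = r j).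
  elim=> [|m IH] k rk Hk R2 R1 R0 RF.
    exists rk; split; last by rewrite -Hk addn0 R0.
    apply: (exec_ins (ex_refl _ _ _) Hi3); by rewrite /= R2 R1 -Hk addn0 eqxx.
  have E0 : exec p og (bl, rk) ((bl + 1), rk).
    apply: (exec_ins (ex_refl _ _ _) Hi3); rewrite /= R2 R1 addn1.
    by have -> : (k == N) = false by apply/eqP; lia.
  have [rb [Eb [Vb Fb]]] := IHb _ f.+3 (bl + 1) rk p Hrsb Hb.
  have Mrb : [seq rk i | i <- rs] = [seq r i | i <- rs] by apply: map_frame Hrs RF.
  pose rn := upd (upd rb f (rb f.+3)) f.+2 (upd rb f (rb f.+3) f.+2).+1.
  have H2 : rn f.+2 = k.+1.
    rewrite /rn !updE eqxx; case: eqP => [?|_]; first lia. by rewrite Fb ?R2.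
  have H1 : rn f.+1 = N.
    rewrite /rn !updE; do 2 (case: eqP => [?|_]; first lia). by rewrite Fb ?R1.
  have H0 : rn f = iterk k.+1 F A.
    rewrite /rn !updE eqxx; case: eqP => [?|_]; first lia.
    by rewrite Vb /= R0 R2 Mrb.
  have HF : forall j, j < f -> rn j = r j.
    move=> j Hj; rewrite /rn !updE; do 2 (case: eqP => [?|_]; first lia). by rewrite Fb ?RF //; lia.
  have [r' [E' [V' F']]] := IH k.+1 rn ltac:(lia) H2 H1 H0 HF.
  exists r'; split => //.
  apply: (exec_trans _ E').
  apply: (exec_ins _ Hj3); last by rewrite /= eqxx.
  by apply: (exec_ins _ Hj2); first by apply: (exec_ins (exec_trans E0 Eb) Hj1).
have E3 : exec p og (b, r) (bl, upd (upd r2 f (r2 f.+2)) f.+2 0).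
  apply: (exec_ins _ Hi2); last by rewrite /= /bl; congr (Some (_, _)); lia.
  by apply: (exec_ins (exec_trans E1 E2) Hi1); rewrite /= addn1.
set r4 := upd (upd r2 f (r2 f.+2)) f.+2 0 in E3.
have G2 : r4 f.+2 = 0 by rewrite /r4 !updE eqxx.
have G1 : r4 f.+1 = N.
  rewrite /r4 !updE; do 2 (case: eqP => [?|_]; first lia). by rewrite F2 ?V1.
have G0 : r4 f = iterk 0 F A.
  rewrite /r4 !updE eqxx; case: eqP => [?|_]; first lia. by rewrite V2 /= (map_frame (allS Hrs) F1).
have GF : forall j, j < f -> r4 j = r j.
  move=> j Hj; rewrite /r4 !updE; do 2 (case: eqP => [?|_]; first lia). by rewrite F2 ?F1 //; lia.
have [r' [E' [V' F']]] := Loop N 0 r4 (add0n N) G2 G1 G0 GF.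
exists r'; split; last by [].
have -> : b + (csize en + csize ea + 1 + 1 + 1 + csize eb + 1 + 1 + 1) = bend by rewrite /bend /bl; lia.
exact: exec_trans E3 E'.
Qed.
Lemma ok_call m a1 a2 a3 a4 : Ok m -> Ok a1 -> Ok a2 -> Ok a3 -> Ok a4 -> Ok (ECall m a1 a2 a3 a4).
Proof.
move=> IHm IH1 IH2 IH3 IH4 rs f b r p Hrs Ha; rewrite /= in Ha *.
have [r1 [E1 [V1 F1]]] := IH1 rs f b r p Hrs (at_catl Ha).
have Ha2 := at_catr Ha; rewrite size_comp in Ha2.
have [r2 [E2 [V2 F2]]] := IH2 rs f.+1 _ r1 p (allS Hrs) (at_catl Ha2).
have Ha3 := at_catr Ha2; rewrite size_comp in Ha3.
have [r3 [E3 [V3 F3]]] := IH3 rs f.+2 _ r2 p (allS (allS Hrs)) (at_catl Ha3).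
have Ha4 := at_catr Ha3; rewrite size_comp in Ha4.
have [r4 [E4 [V4 F4]]] := IH4 rs f.+3 _ r3 p (allS (allS (allS Hrs))) (at_catl Ha4).
have Ha5 := at_catr Ha4; rewrite size_comp in Ha5.
have Hm : all (fun x => x < f.+4) [:: f; f.+1; f.+2; f.+3] by rewrite /= !ltnS !leqnSn leqW ?leqW ?leqnn.
have [r5 [E5 [V5 F5]]] := IHm _ f.+4 _ r4 p Hm (at_catl Ha5).
have Ha6 := at_catr Ha5; rewrite size_comp in Ha6.
exists (upd r5 f (r5 f.+4)); split.
  apply: (exec_ins (exec_trans E1 (exec_trans E2 (exec_trans E3 (exec_trans E4 E5)))) Ha6).
  rewrite /=; congr (Some (_, _)); lia.
have M1 : map r1 rs = map r rs by apply: map_frame Hrs F1.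
have M2 : map r2 rs = map r rs by rewrite (map_frame (allS Hrs) F2).
have M3 : map r3 rs = map r rs by rewrite (map_frame (allS (allS Hrs)) F3).
split.
  rewrite updE eqxx V5 /=; congr (eval _ [:: _; _; _; _] _).
  - rewrite F4; last lia. rewrite F3; last lia. rewrite F2; last lia. by rewrite V1.
  - rewrite F4; last lia. rewrite F3; last lia. by rewrite V2 M1.
  - rewrite F4; last lia. by rewrite V3 M2.
  - by rewrite V4 M3.
move=> j Hj; rewrite updE; case: eqP => [?|_]; first lia.
rewrite F5 ?F4 ?F3 ?F2 ?F1 //; lia.
Qed.

Theorem comp_ok e : Ok e.
Proof.
elim: e; [exact: ok_var|exact: ok_zero|exact: ok_succ|exact: ok_or|
  by move=> *; apply: ok_let|by move=> *; apply: ok_if|by move=> *; apply: ok_iter|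
  by move=> *; apply: ok_call].
Qed.
End Comp.

Lemma sdecodeK s : sdecode (scode s) = s.
Proof. exact: CodeSeq.codeK. Qed.
Lemma scodeK n : scode (sdecode n) = n.
Proof. exact: CodeSeq.decodeK. Qed.

Definition nat_of_instr (i : instr) : nat :=
  match i with
  | IZ a => scode [:: 0; a]
  | IS a => scode [:: 1; a]
  | IT a b => scode [:: 2; a; b]
  | IJ a b q => scode [:: 3; a; b; q]
  | IO a => scode [:: 4; a]
  end.

Lemma nat_of_instrK : cancel nat_of_instr instr_of_nat.
Proof. by case=> *; rewrite /nat_of_instr /instr_of_nat sdecodeK. Qed.

Definition orac (T : pred (seq nat)) (y : nat) : nat := nat_of_bool (T (sdecode y)).

Lemma computable_from_expr T (A : seq nat -> Prop) main :
  (forall x, (eval (orac T) [:: x] main = 1 /\ A (sdecode x)) \/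
             (eval (orac T) [:: x] main = 0 /\ ~ A (sdecode x))) ->
  computable_in T A.
Proof.
move=> H.
pose prog := comp main [:: 0] 1 0 ++ [:: IT 1 0].
exists (scode (map nat_of_instr prog)) => x.
have Hm : machine (scode (map nat_of_instr prog)) = prog.
  by rewrite /machine sdecodeK -map_comp (eq_map nat_of_instrK) map_id.
rewrite Hm.
have Hat : at_ prog 0 (comp main [:: 0] 1 0) by exists [::], [:: IT 1 0].
have [r1 [E1 [V1 F1]]] := @comp_ok (orac T) main [:: 0] 1 0 (init x).2 prog isT Hat.
have Hat2 : at_ prog (csize main) [:: IT 1 0].
  by exists (comp main [:: 0] 1 0), [::]; rewrite size_comp.
have E2 := exec_ins E1 Hat2 (erefl _).
have [s Hs] := exec_run E2 ltac:(by rewrite /halted /prog size_cat size_comp /= addn1).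
exists s; eexists; split; first exact Hs.
by rewrite /= updE eqxx V1 /=.
Qed.

Lemma find_iota_le (P : pred nat) n : find P (iota 0 n) <= n.
Proof. by rewrite -{2}(size_iota 0 n) find_size. Qed.

Lemma find_iota_lt (P : pred nat) n : find P (iota 0 n) < n -> P (find P (iota 0 n)).
Proof.
move=> H; have Hh : has P (iota 0 n) by rewrite has_find size_iota.
by have := nth_find 0 Hh; rewrite nth_iota.
Qed.

Lemma find_iota_before (P : pred nat) n k : k < find P (iota 0 n) -> P k = false.
Proof.
move=> Hk; have := before_find 0 Hk; rewrite nth_iota //.
by apply: (leq_trans Hk); apply: find_iota_le.
Qed.

Lemma find_iota_eq (P : pred nat) n m : m < n -> P m -> (forall k, k < m -> P k = false) ->
  find P (iota 0 n) = m.
Proof.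
move=> Hmn Pm Hb.
case: (ltngtP (find P (iota 0 n)) m) => H //.
- by have := Hb _ H; rewrite find_iota_lt // (ltn_trans H Hmn).
- by have := find_iota_before H; rewrite Pm.
Qed.

Lemma find_iota_none (P : pred nat) n : (forall k, k < n -> P k = false) -> find P (iota 0 n) = n.
Proof.
move=> H; apply/eqP; rewrite eqn_leq find_iota_le /= leqNgt; apply/negP => Hl.
by have := find_iota_lt Hl; rewrite H.
Qed.

Lemma find_iota_ext (P Q : pred nat) n : (forall k, k < n -> P k = Q k) ->
  find P (iota 0 n) = find Q (iota 0 n).
Proof.
move=> H; apply: eq_in_find => x; rewrite mem_iota add0n => /andP [_ Hx]; exact: H.
Qed.

Lemma t_step_ge s p n : p < t_step s p n.
Proof. rewrite /t_step; case: (mu_t n s) => [t|] //; by rewrite leq_max leqnn. Qed.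

Lemma tseq_lt s n : tseq s n < tseq s n.+1.
Proof. exact: t_step_ge. Qed.

Lemma tseq_ge s n : n + 2 <= tseq s n.
Proof.
elim: n => [|n IH] /=; first exact: t_step_ge.
by apply: leq_trans (t_step_ge _ _ _); rewrite addSn ltnS.
Qed.

Lemma tseq_mono s i j : i <= j -> tseq s i <= tseq s j.
Proof.
move=> /subnK <-; elim: (j - i) => [|d IH]; first by rewrite add0n.
by apply: (leq_trans IH); rewrite addSn; exact: ltnW (tseq_lt _ _).
Qed.

Definition muf n s := find (fun t => conv n (take t s)) (iota 0 (size s).+1).

Lemma mu_tE n s : mu_t n s = if muf n s <= size s then Some (muf n s) else None.
Proof. by []. Qed.

Lemma mu_t_take n s L : L <= size s ->
  mu_t n (take L s) = if muf n s <= L then Some (muf n s) else None.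
Proof.
move=> HL; rewrite mu_tE size_takel //.
have -> : muf n (take L s) = find (fun t => conv n (take t s)) (iota 0 L.+1).
  rewrite /muf size_takel //; apply: find_iota_ext => k Hk; by rewrite take_takel.
case: (leqP (muf n s) L) => Hi.
- have -> : find (fun t => conv n (take t s)) (iota 0 L.+1) = muf n s.
    apply: find_iota_eq; first by rewrite ltnS.
    + apply: (@find_iota_lt (fun t => conv n (take t s)) (size s).+1); apply: (leq_ltn_trans Hi); by rewrite ltnS.
    + move=> k Hk; exact: (@find_iota_before (fun t => conv n (take t s)) (size s).+1 k Hk).
  by rewrite Hi.
- rewrite find_iota_none ?ltnn // => k Hk; apply: (@find_iota_before (fun t => conv n (take t s)) (size s).+1).
  by apply: (leq_trans Hk).
Qed.

Lemma t_step_take s L p n : L <= size s -> t_step s p n <= L ->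
  t_step (take L s) p n = t_step s p n.
Proof.
move=> HL; rewrite /t_step mu_t_take // mu_tE.
case: (leqP (muf n s) L) => H1.
- by rewrite (leq_trans H1 HL).
- case: ifP => // _ Hm; exfalso; move: Hm; rewrite geq_max => /andP [_ H2]; lia.
Qed.

Lemma tseq_take s j : tseq s j <= size s ->
  forall i, i <= j -> tseq (take (tseq s j) s) i = tseq s i.
Proof.
move=> Hj; elim=> [|i IH] Hi /=.
- by apply: t_step_take => //; exact: (tseq_mono s (leq0n j)).
- rewrite IH; last exact: ltnW.
  by apply: t_step_take => //; exact: tseq_mono Hi.
Qed.

Lemma jk_le s : jk s <= size s.
Proof.
have Hh : has (fun k => size s < tseq s k) (iota 0 (size s).+1).
  apply/hasP; exists (size s); first by rewrite mem_iota; lia.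
  by have := tseq_ge s (size s); lia.
by move: Hh; rewrite has_find size_iota ltnS.
Qed.

Lemma jk_before s j : j < jk s -> tseq s j <= size s.
Proof. move=> H; have := find_iota_before H; by move/negbT; rewrite -leqNgt. Qed.

Lemma jk_at s : size s < tseq s (jk s).
Proof. apply: (find_iota_lt (P := fun k => size s < tseq s k)); rewrite ltnS; exact: jk_le. Qed.

Lemma jk_take s j : j < jk s -> jk (take (tseq s j) s) = j.+1.
Proof.
move=> Hj; have HL := jk_before Hj.
rewrite /jk size_takel //; apply: find_iota_eq.
- by have := tseq_ge s j; rewrite ltnS; lia.
- rewrite /= tseq_take //. exact: t_step_ge.
- move=> k Hk; have Hk' : k <= j by lia.
  rewrite (tseq_take HL Hk').
  by apply/negbTE; rewrite -leqNgt; apply: tseq_mono.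
Qed.

Lemma size_J s : size (J s) = jk s.
Proof. by rewrite size_map size_iota. Qed.

Lemma J_take s j : j < jk s -> J (take (tseq s j) s) = take j.+1 (J s).
Proof.
move=> Hj; rewrite /J jk_take // -map_take take_iota; have -> : minn j.+1 (jk s) = j.+1 by lia.
apply/eq_in_map => i; rewrite mem_iota add0n => /andP [_ Hi].
have Hi' : i <= j by lia.
by rewrite (tseq_take (jk_before Hj) Hi') take_takel // tseq_mono.
Qed.

Lemma J_nil : J [::] = [::].
Proof.
rewrite /J; have -> : jk [::] = 0 by apply: find_iota_eq => //=; have := tseq_ge [::] 0; lia.
by [].
Qed.

Lemma JT_tree (T : pred (seq nat)) : is_tree (fun s => T s) -> is_tree (JT T).
Proof.
move=> HT s t Hp [sg Tsg Hsg].
have Hs : s = take (size s) t by move: Hp; rewrite prefixE => /eqP.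
have Hm : size s <= jk sg by rewrite -size_J Hsg Hs size_take; case: ifP => //; lia.
case Em: (size s) Hs Hm => [|j] Hs Hm.
- exists [::]; first by apply: (HT _ sg) => //; rewrite prefixE take0.
  by rewrite J_nil Hs take0.
- exists (take (tseq sg j) sg); first by apply: (HT _ sg) => //; exact: prefix_take.
  by rewrite J_take // Hs Hsg.
Qed.

Definition decide (T : pred (seq nat)) (x : nat) : bool :=
  let s := sdecode x in
  if s is [::] then T [::] else T (sdecode (last 0 s)) && (J (sdecode (last 0 s)) == s).

Lemma decideP (T : pred (seq nat)) x : is_tree (fun s => T s) ->
  decide T x <-> JT T (sdecode x).
Proof.
move=> HT; rewrite /decide; case Es: (sdecode x) => [|a l].
- split; first by move=> H; exists [::] => //; rewrite J_nil.
  by case=> sg Tsg _; apply: (HT _ sg) => //; rewrite prefixE take0.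
- split; first by move=> /andP [H1 /eqP H2]; exists (sdecode (last 0 (a :: l))).
  case=> sg Tsg Hsg.
  have Hk : 0 < jk sg by rewrite -size_J Hsg.
  have Hj : (jk sg).-1 < jk sg by rewrite prednK.
  have Hl : last 0 (a :: l) = scode (take (tseq sg (jk sg).-1) sg).
    rewrite -nth_last -Hsg size_J /J (nth_map 0) ?size_iota // nth_iota //.
  rewrite Hl /scode /sdecode CodeSeq.codeK.
  apply/andP; split; first by apply: (HT _ sg) => //; exact: prefix_take.
  by rewrite J_take // prednK // -size_J take_size Hsg.
Qed.

Lemma iterkS k f a : iterk k.+1 f a = f k (iterk k f a).
Proof. by []. Qed.

Notation v0 := (EVar 0).
Notation v1 := (EVar 1).
Notation v2 := (EVar 2).
Notation v3 := (EVar 3).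
Notation v4 := (EVar 4).
Notation v5 := (EVar 5).
Notation c1 m a := (ECall m a EZero EZero EZero).
Notation c2 m a b := (ECall m a b EZero EZero).
Notation c3 m a b c := (ECall m a b c EZero).
Notation N1 := (ESucc EZero).

Definition PRED := locked (EIter v0 EZero v1).
Definition ADD := locked (EIter v1 v0 (ESucc v0)).
Definition SUB := locked (EIter v1 v0 (c1 PRED v0)).
Definition MUL := locked (EIter v1 EZero (c2 ADD v0 v2)).
Definition LEB := locked (EIf (c2 SUB v0 v1) EZero N1 EZero).
Definition EQB := locked (EIf v0 v1 N1 EZero).
Definition POW2 := locked (EIter v0 N1 (c2 ADD v0 v0)).
(* a / b : count i < a with (i+1)*b <= a *)
Definition DIV := locked (EIter v0 EZero (EIf (c2 LEB (c2 MUL (ESucc v1) v3) v2) N1 (ESucc v0) v0)).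
Definition MOD := locked (c2 SUB v0 (c2 MUL v1 (c2 DIV v0 v1))).
Definition MAX := locked (c2 ADD v0 (c2 SUB v1 v0)).
Definition MIN := locked (c2 SUB v0 (c2 SUB v0 v1)).

Section Arith.
Variable g : nat -> nat.
Implicit Types (x y z w : nat).

Lemma PRED_E x y z w : eval g [:: x; y; z; w] PRED = x.-1.
Proof. by rewrite /PRED -lock /=; case: x. Qed.

Lemma ADD_E x y z w : eval g [:: x; y; z; w] ADD = x + y.
Proof. rewrite /ADD -lock /=; elim: y => [|y IH] /=; by rewrite ?addn0 ?IH ?addnS. Qed.

Lemma SUB_E x y z w : eval g [:: x; y; z; w] SUB = x - y.
Proof. rewrite /SUB -lock /=; elim: y => [|y IH] /=; by rewrite ?subn0 // PRED_E IH subnS. Qed.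

Lemma MUL_E x y z w : eval g [:: x; y; z; w] MUL = x * y.
Proof. rewrite /MUL -lock /=; elim: y => [|y IH] /=; by rewrite ?muln0 // ADD_E IH mulnS addnC. Qed.

Lemma LEB_E x y z w : eval g [:: x; y; z; w] LEB = (x <= y).
Proof. by rewrite /LEB -lock /= SUB_E /leq; case: (x - y == 0). Qed.

Lemma EQB_E x y z w : eval g [:: x; y; z; w] EQB = (x == y).
Proof. by rewrite /EQB -lock /=; case: (x == y). Qed.

Lemma POW2_E x y z w : eval g [:: x; y; z; w] POW2 = 2 ^ x.
Proof. rewrite /POW2 -lock /=; elim: x => [|x IH] //=; by rewrite ADD_E IH expnS mul2n addnn. Qed.

Lemma iterk_count (P : pred nat) n f : (forall i a, f i a = if P i then a.+1 else a) ->
  iterk n f 0 = count P (iota 0 n).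
Proof.
move=> H; elim: n => [|n IH] //; rewrite iterkS H IH.
have -> : iota 0 n.+1 = iota 0 n ++ [:: n] by rewrite -addn1 iotaD.
by rewrite count_cat /=; case: (P n); rewrite ?addn1 ?addn0.
Qed.

Lemma count_lt m n : count (fun i => i < m) (iota 0 n) = minn m n.
Proof.
elim: n => [|n IH]; first by rewrite minn0.
have -> : iota 0 n.+1 = iota 0 n ++ [:: n] by rewrite -addn1 iotaD.
rewrite count_cat IH /= addn0; case: (ltnP n m) => H; lia.
Qed.

Lemma DIV_E x y z w : 0 < y -> eval g [:: x; y; z; w] DIV = x %/ y.
Proof.
move=> Hy; rewrite /DIV -lock /=.
rewrite (@iterk_count (fun i => i < x %/ y)); last first.
  by move=> i a /=; rewrite MUL_E LEB_E leq_divRL //; case: (i.+1 * y <= x).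
rewrite count_lt; apply/minn_idPl; exact: leq_div.
Qed.

Lemma MOD_E x y z w : 0 < y -> eval g [:: x; y; z; w] MOD = x %% y.
Proof. move=> Hy; rewrite /MOD -lock /= SUB_E MUL_E DIV_E // {1}(divn_eq x y) mulnC; lia. Qed.

Lemma MAX_E x y z w : eval g [:: x; y; z; w] MAX = maxn x y.
Proof. rewrite /MAX -lock /= ADD_E SUB_E; lia. Qed.

Lemma MIN_E x y z w : eval g [:: x; y; z; w] MIN = minn x y.
Proof. rewrite /MIN -lock /= !SUB_E; lia. Qed.
End Arith.

Lemma scode_cons h s : scode (h :: s) = 2 ^ h * (scode s).*2.+1.
Proof. by []. Qed.

Lemma scode_eq0 s : (scode s == 0) = (s == [::]).
Proof. case: s => // h s; rewrite scode_cons muln_eq0 expn_eq0 /=; done. Qed.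

Lemma size_le_code s : size s <= scode s.
Proof.
elim: s => // h s IH; rewrite scode_cons /=.
apply: leq_trans (_ : (scode s).*2.+1 <= _); first by rewrite ltnS -addnn; lia.
by rewrite leq_pmull // expn_gt0.
Qed.

Lemma head_lt_code h s : h < scode (h :: s).
Proof. by have := CodeSeq.ltn_code (h :: s); rewrite /= => /andP []. Qed.

Lemma logn_code h s : logn 2 (scode (h :: s)) = h.
Proof.
rewrite scode_cons mulnC logn_Gauss ?pfactorK // coprime2n -addnn /=.
by rewrite oddD addbb.
Qed.

Definition VAL := locked (EIter v0 EZero (EIf (c2 MOD v2 (c1 POW2 (ESucc v1))) EZero (ESucc v0) v0)).
Definition TL := locked (c2 DIV (c1 PRED (c2 DIV v0 (c1 POW2 (c1 VAL v0)))) (ESucc N1)).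
Definition CONS := locked (c2 MUL (c1 POW2 v0) (ESucc (c2 ADD v1 v1))).
Definition DROP := locked (EIter v1 v0 (c1 TL v0)).
Definition NTH := locked (c1 VAL (c2 DROP v0 v1)).
Definition SIZE := locked (EIter v0 EZero (EIf (c2 DROP v2 v1) EZero v0 (ESucc v0))).

Section Seqs.
Variable g : nat -> nat.
Implicit Types (x y z w c : nat).

Lemma VAL_E c y z w : eval g [:: c; y; z; w] VAL = head 0 (sdecode c).
Proof.
rewrite -{1}(scodeK c); case: (sdecode c) => [|h s]; first by rewrite /VAL -lock.
rewrite /VAL -lock /=.
have Hc : 0 < scode (h :: s) by rewrite lt0n scode_eq0.
rewrite (@iterk_count (fun i => i < h)); last first.
  move=> i a /=; rewrite POW2_E MOD_E ?expn_gt0 // -/(dvdn _ _) pfactor_dvdn //.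
  by rewrite logn_code; case: (i < h).
rewrite count_lt; apply/minn_idPl; exact: ltnW (head_lt_code _ _).
Qed.

Lemma TL_E c y z w : eval g [:: c; y; z; w] TL = scode (behead (sdecode c)).
Proof.
rewrite /TL -lock /= POW2_E VAL_E.
rewrite -{1}(scodeK c); case: (sdecode c) => [|h s] /=.
  by rewrite DIV_E // PRED_E DIV_E.
rewrite !DIV_E ?expn_gt0 // mulKn ?expn_gt0 // PRED_E /=.
by rewrite -mul2n mulKn.
Qed.

Lemma CONS_E h c z w : eval g [:: h; c; z; w] CONS = scode (h :: sdecode c).
Proof. by rewrite /CONS -lock [LHS]/= MUL_E POW2_E ADD_E scode_cons scodeK addnn. Qed.

Lemma DROP_E c i z w : eval g [:: c; i; z; w] DROP = scode (drop i (sdecode c)).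
Proof.
rewrite /DROP -lock /=; elim: i => [|i IH]; first by rewrite drop0 scodeK.
by rewrite iterkS TL_E IH sdecodeK -drop1 drop_drop add1n.
Qed.

Lemma NTH_E c i z w : eval g [:: c; i; z; w] NTH = nth 0 (sdecode c) i.
Proof.
rewrite /NTH -lock /= DROP_E VAL_E sdecodeK.
by case: (ltnP i (size (sdecode c))) => H; rewrite -nth0 nth_drop addn0.
Qed.

Lemma SIZE_E c y z w : eval g [:: c; y; z; w] SIZE = size (sdecode c).
Proof.
rewrite /SIZE -lock /=.
rewrite (@iterk_count (fun i => i < size (sdecode c))); last first.
  move=> i a /=; rewrite DROP_E scode_eq0 -size_eq0 size_drop subn_eq0 leqNgt.
  by case: (i < size _).
rewrite count_lt; apply/minn_idPl; rewrite -{2}(scodeK c); exact: size_le_code.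
Qed.
End Seqs.

Definition MK gm := locked (EIter v0 EZero (c2 CONS (ECall gm (c2 SUB (c1 PRED v2) v1) v3 v4 v5) v0)).
Definition CNT gm := locked (EIter v0 EZero (EIf (ECall gm v1 v3 v4 v5) EZero v0 (ESucc v0))).
Definition FIND gm := locked (EIter v0 v0 (EIf v0 v2 (EIf (ECall gm v1 v3 v4 v5) EZero v0 v1) v0)).

Section Comb.
Variable g : nat -> nat.

Lemma MK_E gm (G : nat -> nat) M p1 p2 p3 :
  (forall i, eval g [:: i; p1; p2; p3] gm = G i) ->
  eval g [:: M; p1; p2; p3] (MK gm) = scode (mkseq G M).
Proof.
move=> HG; rewrite /MK -lock /=.
suff H : forall k, k <= M -> iterk k (fun i acc => eval g
       [:: eval g [:: eval g [:: eval g [:: M; 0; 0; 0] PRED; i; 0; 0] SUB; p1; p2; p3] gm;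
           acc; 0; 0] CONS) 0 = scode (map G (iota (M - k) k)).
  by rewrite H // subnn.
elim=> [|k IH] Hk; first by rewrite subn0.
rewrite iterkS IH ?(ltnW Hk) // PRED_E SUB_E HG CONS_E sdecodeK.
have -> : M - k = (M - k.+1).+1 by lia.
by have -> : M.-1 - k = M - k.+1 by lia.
Qed.

Lemma CNT_E gm (G : nat -> nat) n p1 p2 p3 :
  (forall i, eval g [:: i; p1; p2; p3] gm = G i) ->
  eval g [:: n; p1; p2; p3] (CNT gm) = count (fun i => G i != 0) (iota 0 n).
Proof.
move=> HG; rewrite /CNT -lock /=; apply: iterk_count => i a /=.
by rewrite HG; case: (G i).
Qed.

Lemma FIND_E gm (G : nat -> nat) n p1 p2 p3 :
  (forall i, eval g [:: i; p1; p2; p3] gm = G i) ->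
  eval g [:: n; p1; p2; p3] (FIND gm) = find (fun i => G i != 0) (iota 0 n).
Proof.
move=> HG; rewrite /FIND -lock /=.
set P := (fun i => G i != 0).
suff H : forall k, k <= n -> iterk k (fun i acc =>
   if acc == n then (if eval g [:: i; p1; p2; p3] gm == 0 then acc else i) else acc) n
   = if has P (iota 0 k) then find P (iota 0 k) else n.
  rewrite H //; case: ifP => // /negbT Hn.
  by rewrite (hasNfind Hn) size_iota.
elim=> [|k IH] Hk //.
rewrite iterkS IH ?(ltnW Hk) //.
have -> : iota 0 k.+1 = iota 0 k ++ [:: k] by rewrite -addn1 iotaD.
rewrite has_cat find_cat /= orbF.
case Hh: (has P (iota 0 k)).
  have : find P (iota 0 k) < k by rewrite -{2}(size_iota 0 k) -has_find.
  by case: eqP => //; lia.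
rewrite eqxx HG size_iota /P /=; case: (G k) => // *; by rewrite addn0.
Qed.
End Comb.

Definition NTHg := locked (c2 NTH v1 v0).
Definition TAKEC := locked (ECall (MK NTHg) (c2 MIN v1 (c1 SIZE v0)) v0 EZero EZero).
Definition SETg := locked (EIf v0 v2 v3 (c2 NTH v1 v0)).
Definition SETN := locked (ECall (MK SETg) (c2 MAX (c1 SIZE v0) (ESucc v1)) v0 v1 v2).

Section Seq2.
Variable g : nat -> nat.

Lemma take_mkseq (s : seq nat) t : take t s = mkseq (nth 0 s) (minn t (size s)).
Proof.
by rewrite /mkseq map_nth_iota0 ?geq_minr // take_min take_size.
Qed.

Lemma TAKEC_E c t z w : eval g [:: c; t; z; w] TAKEC = scode (take t (sdecode c)).
Proof.
rewrite /TAKEC -lock [LHS]/= SIZE_E MIN_E (@MK_E _ _ (nth 0 (sdecode c))); first by rewrite take_mkseq.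
by move=> i; rewrite /NTHg -lock /= NTH_E.
Qed.

Lemma SETN_E L a v w i : nth 0 (sdecode (eval g [:: L; a; v; w] SETN)) i =
   if i == a then v else nth 0 (sdecode L) i.
Proof.
rewrite /SETN -lock [eval _ _ (ECall _ _ _ _ _)]/= SIZE_E MAX_E.
rewrite (@MK_E _ _ (fun i => if i == a then v else nth 0 (sdecode L) i)); last first.
  by move=> j; rewrite /SETg -lock /= NTH_E.
rewrite sdecodeK.
case: (ltnP i (maxn (size (sdecode L)) a.+1)) => H; first by rewrite nth_mkseq.
rewrite nth_default ?size_mkseq //.
have Ha : i != a by apply/eqP => E; move: H; rewrite E geq_max ltnn andbF.
rewrite (negbTE Ha) nth_default //; move: H; rewrite geq_max => /andP []. by [].
Qed.
End Seq2.

Inductive sst := SRun of state | SHalt | SStuck.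

Definition simstep p o (x : sst) : sst :=
  match x with
  | SRun st => if halted p st then SHalt else
               match step p o st with Some st' => SRun st' | None => SStuck end
  | y => y
  end.

Definition is_halt (x : sst) : bool := if x is SHalt then true else false.

Lemma run_sim p o s st : isSome (run p o s st) = is_halt (iter s (simstep p o) (SRun st)).
Proof.
have fixH : forall k, iter k (simstep p o) SHalt = SHalt by elim=> //= k ->.
have fixS : forall k, iter k (simstep p o) SStuck = SStuck by elim=> //= k ->.
elim: s st => [|s IH] st; first by [].
rewrite iterSr /=.
case: ifP => _; first by rewrite fixH.
case: (step p o st) => [st'|]; first exact: IH.
by rewrite fixS.
Qed.

Lemma stepE p o st : step p o st = stepi o (nth (IZ 0) p st.1) st.
Proof. by case: st. Qed.

Lemma instr_decode ic : instr_of_nat ic =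
  let l := sdecode ic in let h := nth 0 l 0 in let a := nth 0 l 1 in
  let b := nth 0 l 2 in let q := nth 0 l 3 in
  if size l == 2 then (if h == 0 then IZ a else if h == 1 then IS a else if h == 4 then IO a else IZ 0)
  else if size l == 3 then (if h == 2 then IT a b else IZ 0)
  else if size l == 4 then (if h == 3 then IJ a b q else IZ 0) else IZ 0.
Proof.
rewrite /instr_of_nat /=; case: (sdecode ic) => [|x [|y [|z [|u [|v l]]]]] //=;
  do 5? (case: x => [|x] //).
Qed.

Definition enc (x : sst) (c : nat) : Prop :=
  match x with
  | SRun (pc, r) => exists L, c = scode [:: 0; pc; L] /\ forall i, r i = nth 0 (sdecode L) i
  | SHalt => nth 0 (sdecode c) 0 = 1
  | SStuck => nth 0 (sdecode c) 0 = 2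
  end.

Notation N2 := (ESucc N1).
Notation N3 := (ESucc N2).
Notation N4 := (ESucc N3).

Definition TRIP e1 e2 := locked (c2 CONS EZero (c2 CONS e1 (c2 CONS e2 EZero))).

Lemma TRIP_E g env e1 e2 : eval g env (TRIP e1 e2) = scode [:: 0; eval g env e1; eval g env e2].
Proof. by rewrite /TRIP -lock /= !CONS_E !sdecodeK. Qed.

Definition ISTEP :=
  let sz := c1 SIZE v0 in let h := c2 NTH v0 EZero in let a := c2 NTH v0 N1 in
  let b := c2 NTH v0 N2 in let q := c2 NTH v0 N3 in
  let Ra := c2 NTH v2 a in let Rb := c2 NTH v2 b in let npc := ESucc v1 in
  let CZ := TRIP npc (c3 SETN v2 a EZero) in
  let CS := TRIP npc (c3 SETN v2 a (ESucc Ra)) in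
  let CT := TRIP npc (c3 SETN v2 b Ra) in
  let CJ := TRIP (EIf Ra Rb q npc) v2 in
  let CO := EIf (c2 LEB (c1 SIZE v3) Ra) N1 (c2 CONS N2 EZero) (TRIP npc (c3 SETN v2 a (c2 NTH v3 Ra))) in
  let DEF := TRIP npc (c3 SETN v2 EZero EZero) in
  locked (EIf sz N2 (EIf h EZero CZ (EIf h N1 CS (EIf h N4 CO DEF)))
    (EIf sz N3 (EIf h N2 CT DEF) (EIf sz N4 (EIf h N3 CJ DEF) DEF))).

Arguments scode : simpl never.
Arguments sdecode : simpl never.

Section Sim.
Variable g : nat -> nat.

Lemma enc_run pc (r : nat -> nat) L : (forall i, r i = nth 0 (sdecode L) i) ->
  enc (SRun (pc, r)) (scode [:: 0; pc; L]).
Proof. by move=> H; exists L. Qed.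

Lemma nat_of_bool_eq1 (b : bool) : (nat_of_bool b == 1) = b.
Proof. by case: b. Qed.

Lemma ISTEP_E ic pc (r : nat -> nat) L tau :
  (forall i, r i = nth 0 (sdecode L) i) ->
  enc (match stepi (str_oracle (sdecode tau)) (instr_of_nat ic) (pc, r) with
       | Some st => SRun st | None => SStuck end)
      (eval g [:: ic; pc; L; tau] ISTEP).
Proof.
move=> HL; rewrite instr_decode /ISTEP -lock /=.
rewrite ?TRIP_E /= !SIZE_E !NTH_E LEB_E nat_of_bool_eq1 -!HL /str_oracle leqNgt if_neg.
repeat (case: ifP => ?); rewrite /= ?CONS_E ?sdecodeK //;
  by apply: enc_run => i /=; rewrite ?SETN_E ?NTH_E ?updE ?HL.
Qed.
End Sim.

Definition RSTEP := locked (EIf (c2 LEB (c1 SIZE v2) v0) N1 (c2 CONS N1 EZero) (ECall ISTEP (c2 NTH v2 v0) v0 v1 v3)).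
Definition SSTEP := locked (EIf (c2 NTH v0 EZero) EZero (ECall RSTEP (c2 NTH v0 N1) (c2 NTH v0 N2) v1 v2) v0).
Definition CONV := locked (EIf (c2 NTH (EIter (c1 SIZE v1) (TRIP EZero (c2 CONS v0 EZero)) (c3 SSTEP v0 v2 v3)) EZero) N1 N1 EZero).

Section Sim2.
Variable g : nat -> nat.

Lemma sdecode0 : sdecode 0 = [::].
Proof. by []. Qed.

Lemma SSTEP_E x c n tau w : enc x c ->
  enc (simstep (machine n) (str_oracle (sdecode tau)) x) (eval g [:: c; n; tau; w] SSTEP).
Proof.
rewrite /SSTEP -lock.
case: x => [[pc r]||] /=.
- case=> L [-> HL]; rewrite !NTH_E sdecodeK /= /RSTEP -lock /= SIZE_E LEB_E NTH_E.
  rewrite /halted /= size_map.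
  case: ifP => Hh /=; first by rewrite CONS_E sdecode0.
  rewrite /machine (nth_map 0); last by rewrite ltnNge Hh.
  exact: ISTEP_E.
- by move=> H; rewrite NTH_E H /= H.
- by move=> H; rewrite NTH_E H /= H.
Qed.

Lemma enc_halt x c : enc x c -> (nth 0 (sdecode c) 0 == 1) = is_halt x.
Proof. by case: x => [[pc r]||] /= => [[L [-> _]]|->|->] //; rewrite sdecodeK. Qed.

Lemma CONV_E n tau z w : eval g [:: n; tau; z; w] CONV = conv n (sdecode tau).
Proof.
rewrite /CONV -lock /= SIZE_E TRIP_E /= CONS_E sdecode0 NTH_E.
rewrite /conv run_sim.
set p := machine n. set o := str_oracle (sdecode tau).
suff H : forall k, enc (iter k (simstep p o) (SRun (init n)))
  (iterk k (fun _ acc => eval g [:: acc; n; tau; 0] SSTEP) (scode [:: 0; 0; scode [:: n]])).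
  by rewrite -(enc_halt (H _)); case: (_ == 1).
elim=> [|k IH] /=.
  exists (scode [:: n]); split; first by []. move=> i; rewrite sdecodeK. by case: i => [|[|i]].
exact: SSTEP_E.
Qed.

End Sim2.

Arguments scode : simpl never.
Arguments sdecode : simpl never.

Definition MUFg := locked (c2 CONV v1 (c2 TAKEC v2 v0)).
Definition MUF := locked (ECall (FIND MUFg) (ESucc (c1 SIZE v1)) v0 v1 EZero).
Definition TSTEP := locked (ELet (c2 MUF v2 v0) (EIf (c2 LEB v0 (c1 SIZE v1)) N1 (c2 MAX (ESucc v2) v0) (ESucc v2))).
Definition TSEQ := locked (EIter (ESucc v1) N1 (c3 TSTEP v2 v0 v1)).
Definition JKg := locked (EIf (c2 LEB (c2 TSEQ v1 v0) (c1 SIZE v1)) N1 EZero N1).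
Definition JK := locked (ECall (FIND JKg) (ESucc (c1 SIZE v0)) v0 EZero EZero).
Definition JCg := locked (c2 TAKEC v1 (c2 TSEQ v1 v0)).
Definition JC := locked (ECall (MK JCg) (c1 JK v0) v0 EZero EZero).
Definition MAIN := locked (EIf v0 EZero (EOr EZero)
  (ELet (c2 NTH v0 (c1 PRED (c1 SIZE v0))) (EIf (EOr v0) EZero EZero (EIf (c1 JC v0) v1 N1 EZero)))).

Lemma nb_neq0 (b : bool) : (nat_of_bool b != 0) = b.
Proof. by case: b. Qed.

Section Top.
Variable g : nat -> nat.

Lemma MUF_E n tau z w : eval g [:: n; tau; z; w] MUF = muf n (sdecode tau).
Proof.
rewrite /MUF -lock [LHS]/= SIZE_E.
rewrite (@FIND_E _ _ (fun t => nat_of_bool (conv n (take t (sdecode tau))))); last first.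
  by move=> t; rewrite /MUFg -lock /= TAKEC_E CONV_E sdecodeK.
by rewrite /muf; apply: eq_find => t; rewrite nb_neq0.
Qed.

Lemma TSTEP_E tau p n w : eval g [:: tau; p; n; w] TSTEP = t_step (sdecode tau) p n.
Proof.
rewrite /TSTEP -lock /= MUF_E SIZE_E LEB_E MAX_E /t_step mu_tE.
by case: (muf n (sdecode tau) <= size (sdecode tau)).
Qed.

Lemma TSEQ_E tau m z w : eval g [:: tau; m; z; w] TSEQ = tseq (sdecode tau) m.
Proof.
rewrite /TSEQ -lock /=; elim: m => [|m IH]; first by rewrite /= TSTEP_E.
by rewrite iterkS IH TSTEP_E.
Qed.

Lemma JK_E tau y z w : eval g [:: tau; y; z; w] JK = jk (sdecode tau).
Proof.
rewrite /JK -lock [LHS]/= SIZE_E.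
rewrite (@FIND_E _ _ (fun k => nat_of_bool (size (sdecode tau) < tseq (sdecode tau) k))); last first.
  move=> k; rewrite /JKg -lock /= TSEQ_E SIZE_E LEB_E ltnNge.
  by case: (tseq _ _ <= _).
by rewrite /jk; apply: eq_find => t; rewrite nb_neq0.
Qed.

Lemma JC_E tau y z w : eval g [:: tau; y; z; w] JC = scode (J (sdecode tau)).
Proof.
rewrite /JC -lock [LHS]/= JK_E.
rewrite (@MK_E _ _ (fun i => scode (take (tseq (sdecode tau) i) (sdecode tau)))) //.
by move=> i; rewrite /JCg -lock /= TSEQ_E TAKEC_E.
Qed.
End Top.

Lemma MAIN_E T x : eval (orac T) [:: x] MAIN = decide T x.
Proof.
rewrite /MAIN -lock /= /decide.
case: eqP => [->|Hx]; first by rewrite /orac.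
have Hs : sdecode x != [::] by apply/eqP => E; apply: Hx; rewrite -(scodeK x) E.
rewrite !SIZE_E PRED_E NTH_E nth_last /orac.
case E: (sdecode x) Hs => [|a l] // _.
case: (T (sdecode (last 0 (a :: l)))) => //=.
rewrite JC_E.
have -> : (scode (J (sdecode (last a l))) == x) = (J (sdecode (last a l)) == a :: l).
  apply/eqP/eqP => H; first by rewrite -E -H sdecodeK.
  by rewrite H -E scodeK.
by case: (_ == _).
Qed.


Theorem lemma4p8 (T : pred (seq nat)) :
  is_tree (fun s => T s) -> is_tree (JT T) /\ computable_in T (JT T).
Proof.
move=> HT; split; first exact: JT_tree.
apply: (@computable_from_expr T (JT T) MAIN) => x.
rewrite MAIN_E; case E: (decide T x).
- by left; split => //; apply/(decideP x HT); rewrite E.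
- right; split => // H; move/(decideP x HT): H; by rewrite E.
Qed.
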